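(* For plane binary tree shapes $t$ let $S_t$, $T$ be as in the context. Then \[ \sum_{\substack{t \in \mathcal{B}_{\le n}\\ |t| < \log_4 n}} \left(1 - \frac{[z^n]S_t(z)}{[z^n]T(z)}\right) = \mathcal{O}\!\left(\frac{n}{(\log_4 n)^{3/2}}\right) \quad \text{as } n\to\infty . \]
   Context: A plane binary tree is a rooted tree in which each node has a left and a right slot, each empty or holding a subtree; $\mathcal{B}_{\le n}$ is the set of (unlabeled) plane binary trees with at most $n$ nodes, and $|t|$ is the number of nodes. A plane increasing binary tree of size $n$ is a plane binary tree whose $n$ nodes are labeled $1,\dots,n$ increasingly along every path from the root; their exponential generating function is $T(z)=z/(1-z)$, so $[z^n]T(z)=1$. A fringe subtree is a node with all its descendants; its shape is obtained by forgetting labels. For a shape $t$ with $k$ nodes, $\ell(t)$ is its number of increasing labelings (equal to $k!$ divided by the product of the sizes of all fringe subtrees of $t$) and $w(t)=\ell(t)/k!$. $S_t(z)$ is the exponential generating function of plane increasing binary trees having no fringe subtree of shape $t$; it is the power series solution of $S_t'(z)=(1+S_t(z))^2-w(t)kz^{k-1}$, $S_t(0)=0$. Thus $1-[z^n]S_t(z)/[z^n]T(z)$ is the probability that a uniformly random plane increasing binary tree of size $n$ has a fringe subtree of shape $t$. *)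

(* Defs.v *)
From mathcomp Require Import all_boot all_algebra.
From mathcomp Require Import reals exp.
Set Implicit Arguments. Unset Strict Implicit. Unset Printing Implicit Defensive.
Import GRing.Theory Num.Theory.
Local Open Scope ring_scope.

(* Plane binary trees: each node has a left and a right slot, each empty
   (Leaf = empty slot) or holding a subtree.  Leaf itself is the empty tree
   (0 nodes); genuine shapes are the Node _ _ values. *)
Inductive btree := Leaf | Node of btree & btree.

Fixpoint tsize (t : btree) : nat :=
  match t with Leaf => 0%N | Node l r => (tsize l + tsize r).+1 end.

Fixpoint hook (t : btree) : nat :=
  match t with Leaf => 1%N | Node l r => (hook l * hook r * tsize (Node l r))%N end.

(* l(t) = |t|! / prod of fringe subtree sizes : number of increasing labelings *)
Definition ell (t : btree) : nat := ((tsize t)`! %/ hook t)%N.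

Definition wt {R : fieldType} (t : btree) : R := (ell t)%:R / ((tsize t)`!)%:R.

(* All plane binary trees with exactly k nodes (fuel-based recursion on the
   size; fuel k suffices since subtrees are strictly smaller). *)
Fixpoint trees_fuel (fuel k : nat) : seq btree :=
  match k with
  | 0 => [:: Leaf]
  | k'.+1 =>
    match fuel with
    | 0 => [::]
    | f.+1 => flatten [seq [seq Node l r | l <- trees_fuel f i, r <- trees_fuel f (k' - i)]
                      | i <- iota 0 k'.+1]
    end
  end.

Definition trees_of_size (k : nat) : seq btree := trees_fuel k k.

(* [z^m] (1 + S(z))^2, where s m = [z^m] S(z). *)
Definition onep {R : nzRingType} (s : nat -> R) (i : nat) : R := (i == 0)%:R + s i.
Definition sq_coef {R : nzRingType} (s : nat -> R) (m : nat) : R :=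
  \sum_(i < m.+1) onep s i * onep s (m - i).

(* s is the coefficient sequence of the power series solution S_t of
   S_t'(z) = (1 + S_t(z))^2 - w(t) k z^(k-1),  S_t(0) = 0,  k = |t|,
   i.e. s m = [z^m] S_t(z) (the EGF coefficient). *)
Definition is_St_coef {R : fieldType} (t : btree) (s : nat -> R) : Prop :=
  (s 0%N = 0) /\ (forall m : nat, (m.+1)%:R * s m.+1 =
    sq_coef s m - (if m == (tsize t).-1 then wt t * (tsize t)%:R else 0)).

(* [z^n] T(z) for T(z) = z/(1-z). *)
Definition Tcoef {R : nzRingType} (n : nat) : R := if n == 0%N then 0 else 1.

Definition log4 {R : realType} (x : R) : R := ln x / ln 4.

(* Main.v *)
Require Import Defs.
From mathcomp Require Import all_boot all_algebra.
From mathcomp Require Import reals exp.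
From mathcomp Require Import all_order ring lra zify.
Import Order.TTheory GRing.Theory Num.Theory.
Local Open Scope ring_scope.

Lemma trees_fuel_SS f k : trees_fuel f.+1 k.+1 =
  flatten [seq [seq Node l r | l <- trees_fuel f i, r <- trees_fuel f (k - i)]
                      | i <- iota 0 k.+1].
Proof. by []. Qed.

Lemma trees_fuel_stable f g i : (i <= f)%N -> (i <= g)%N ->
  trees_fuel f i = trees_fuel g i.
Proof.
elim: f g i => [|f IH] g [|i] Hf Hg.
- by case: g Hg.
- by [].
- by case: g Hg.
case: g Hg => [|g] // Hg.
rewrite !trees_fuel_SS.
congr flatten; apply/eq_in_map => j; rewrite mem_iota /= add0n => Hj.
have -> : trees_fuel f j = trees_fuel g j by apply: IH; lia.
have -> : trees_fuel f (i - j) = trees_fuel g (i - j) by apply: IH; lia.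
by [].
Qed.

Definition cnt (k : nat) : nat := size (trees_of_size k).

Lemma cnt0 : cnt 0 = 1%N. Proof. by []. Qed.

Lemma cntS k : cnt k.+1 = (\sum_(i < k.+1) cnt i * cnt (k - i))%N.
Proof.
rewrite /cnt /trees_of_size trees_fuel_SS size_flatten /shape -map_comp sumnE big_map.
rewrite -(subn0 k.+1) -/(index_iota 0 k.+1) big_mkord.
apply: eq_bigr => i _ /=; rewrite size_allpairs.
have Hi : (i <= k)%N by rewrite -ltnS.
have -> : trees_fuel k i = trees_fuel i i by apply: trees_fuel_stable; lia.
have -> : trees_fuel k (k - i) = trees_fuel (k - i) (k - i) by apply: trees_fuel_stable; lia.
by [].
Qed.

Definition small (m : nat) (p : {poly rat}) := forall i, (i < m)%N -> p`_i = 0.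

Lemma smallD m p q : small m p -> small m q -> small m (p + q).
Proof. by move=> Hp Hq i Hi; rewrite coefD Hp ?Hq ?addr0. Qed.

Lemma smallMr m p q : small m p -> small m (p * q).
Proof.
move=> Hp i Hi; rewrite coefM big1 // => j _; rewrite Hp ?mul0r //.
by apply: leq_ltn_trans Hi; rewrite -ltnS.
Qed.

Lemma smallX m p : small m p -> small m.+1 ('X * p).
Proof. by move=> Hp [|i] Hi; rewrite coefXM //= Hp. Qed.

Lemma smallDeriv m p : small m.+1 p -> small m p^`().
Proof. by move=> Hp i Hi; rewrite coef_deriv Hp ?mul0rn. Qed.

Section Rec.
Variable c : nat -> nat.
Hypothesis c0 : c 0 = 1%N.
Hypothesis cS : forall k, c k.+1 = (\sum_(i < k.+1) c i * c (k - i))%N.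

Lemma cat_rec k : ((k.+2) * c k.+1 = (4 * k + 2) * c k)%N.
Proof.
pose M := k.+2.
pose P : {poly rat} := \poly_(i < M) (c i)%:R.
pose E := P - 1 - 'X * (P * P).
have HE : small M E.
  move=> i Hi; rewrite /E !coefB coefXM coef1 coef_poly Hi.
  case: i Hi => [|i] Hi /=; first by rewrite c0 subrr.
  apply/eqP; rewrite coefM subr0 subr_eq0 cS natr_sum; apply/eqP; apply: eq_bigr => j _.
  rewrite !coef_poly natrM.
  have Hj : (j < M)%N by apply: leq_ltn_trans Hi; rewrite ltnW // ltnS; case: j.
  have Hj' : (i - j < M)%N by apply: leq_ltn_trans Hi; rewrite ltnW // ltnS leq_subr.
  by rewrite Hj Hj'.
have HE' : E^`() = P^`() - (P * P + 'X * (P^`() * P + P * P^`())).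
  by rewrite /E !derivB derivM derivX derivM -polyC1 derivC subr0 mul1r.
pose T := 'X * P^`() - ('X * ('X * P^`())) *+ 4 - (1 - P + ('X * P) *+ 2).
have HT : T = E * (1 + ('X * P) *+ 2 + ('X * ('X * P^`())) *+ 4)
              + 'X * (E^`() * (1 - ('X * P) *+ 2)).
  rewrite HE' /T /E; ring.
have HsT : small M T.
  rewrite HT; apply: smallD; first exact: smallMr.
  by apply: smallX; apply: smallMr; apply: smallDeriv.
have := HsT k.+1 (ltnSn _).
rewrite /T !coefB !coefD coefN !coefXM coef1 /= !coef_deriv !coef_poly /M.
rewrite ltnSn.
case: k {M P E HE HE' T HT HsT} => [|k] /=.
  move=> H; apply/eqP; rewrite -(eqr_nat rat).
  rewrite -subr_eq0; apply/eqP; rewrite -[X in _ = X]H !natrM; ring.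
rewrite (_ : (k.+1 < k.+3)%N = true); last by rewrite ltnS ltnW.
move=> H.
apply/eqP; rewrite -(eqr_nat rat).
rewrite -subr_eq0; apply/eqP; rewrite -[X in _ = X]H !natrM; ring.
Qed.
End Rec.

Section Bnd.
Variable c : nat -> nat.
Hypothesis c0 : c 0 = 1%N.
Hypothesis crec : forall k, ((k.+2) * c k.+1 = (4 * k + 2) * c k)%N.

Lemma cat_bound k : (c k ^ 2 * (k.+1) ^ 2 * (3 * k + 1) <= 16 ^ k)%N.
Proof.
elim: k => [|k IH]; first by rewrite c0.
have -> : (c k.+1 ^ 2 * k.+2 ^ 2 * (3 * k.+1 + 1) = ((4 * k + 2) ^ 2 * (3 * k + 4)) * c k ^ 2)%N.
  have -> : (3 * k.+1 + 1 = 3 * k + 4)%N by lia.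
  rewrite (mulnC (c k.+1 ^ 2)%N) -expnMn crec expnMn.
  by rewrite mulnAC -!mulnA mulnCA.
apply: leq_trans (_ : (16 * (c k ^ 2 * k.+1 ^ 2 * (3 * k + 1)) <= _)%N); last first.
  by rewrite (expnS 16 k) leq_mul2l IH orbT.
apply: (@leq_trans ((16 * (k.+1 ^ 2 * (3 * k + 1))) * c k ^ 2)%N).
  rewrite leq_mul2r; apply/orP; right; nia.
rewrite mulnC !mulnA (mulnC _ 16) -!mulnA leq_mul2l; apply/orP; right.
by rewrite mulnCA mulnA.
Qed.

Lemma cat_double k : (1 <= k)%N -> (2 * c k <= c k.+1)%N.
Proof.
move=> Hk; have := crec k.
have : ((k.+2) * (2 * c k) <= (4 * k + 2) * c k)%N.
  by rewrite mulnA leq_mul2r; apply/orP; right; lia.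
move=> H1 H2; rewrite -H2 in H1.
by rewrite leq_mul2l in H1.
Qed.

Variable P : pred nat.
Hypothesis Pdown : forall k, P k.+1 -> P k.

Lemma Pdown_le a b : (a <= b)%N -> P b -> P a.
Proof.
elim: b => [|b IH]; first by rewrite leqn0 => /eqP ->.
rewrite leq_eqVlt => /orP [/eqP -> //| Hab] Hb.
by apply: IH; [rewrite -ltnS | apply: Pdown].
Qed.

Definition F m := (\sum_(1 <= k < m) (if P k then c k else 0))%N.

Lemma F_bound m : F m = 0%N \/ exists j, [/\ (1 <= j)%N, (j < m)%N, P j,
   (F m <= 2 * c j)%N & (j.+1 = m \/ ~~ P j.+1)].
Proof.
elim: m => [|m IH]; first by left; rewrite /F big_geq.
case: m IH => [|m] IH; first by left; rewrite /F big_geq.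
rewrite /F big_nat_recr // -/(F m.+1).
case HP: (P m.+1); last first.
  rewrite /= addn0; case: IH => [H|[j [H1 H2 H3 H4 H5]]]; first by left.
  right; exists j; split => //; first by apply: ltnW.
  case: H5 => [H5|]; last by right.
  by right; rewrite H5 HP.
right; exists m.+1; split => //.
case: IH => [->|[j [H1 H2 H3 H4 H5]]]; first by rewrite /=; lia.
case: H5 => [H5|H5]; last first.
  have : P j.+1 by apply: (@Pdown_le _ _ H2 HP).
  by rewrite (negbTE H5).
case: H5 => Hj; subst j.
  have := @cat_double _ H1; rewrite /=; lia.
by left.
Qed.
End Bnd.

Section SB.
Variable R : realType.
Variable t : btree.
Variable s : nat -> R.
Hypothesis Hs : is_St_coef t s.

Lemma sq_T m : (forall i, (i <= m)%N -> s i = Tcoef i) -> sq_coef s m = (m.+1)%:R.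
Proof.
move=> H; rewrite /sq_coef (eq_bigr (fun _ => 1)); first by rewrite sumr_const card_ord.
move=> i _; have Hi : (i <= m)%N by rewrite -ltnS.
rewrite /onep !H ?leq_subr // /Tcoef.
have E1 : forall b : bool, b%:R + (if b then 0 else 1) = 1 :> R by case; rewrite ?addr0 ?add0r.
by rewrite !E1 mulr1.
Qed.

Lemma s_T i : (i < Defs.tsize t)%N -> s i = Tcoef i.
Proof.
case: Hs => H0 HS.
suff: forall n j, (j <= n)%N -> (j < Defs.tsize t)%N -> s j = Tcoef j by move/(_ i i (leqnn i)).
clear i.
elim=> [|i IH] j Hj Hk; first by move: Hj; rewrite leqn0 => /eqP ->.
move: Hj Hk; rewrite leq_eqVlt => /orP [/eqP ->|Hj] Hk; last by apply: IH.
have := HS i.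
have -> : (i == (Defs.tsize t).-1) = false by apply/negbTE; lia.
rewrite subr0 sq_T; last by move=> l Hl; apply: IH => //; lia.
move=> E; rewrite /Tcoef /=.
apply: (mulfI (x := (i.+1)%:R)); first by rewrite pnatr_eq0.
by rewrite E mulr1.
Qed.

Lemma wt_bounds : 0 <= wt t :> R /\ wt t <= 1 :> R.
Proof.
rewrite /wt; have Hf : 0 < ((Defs.tsize t)`!)%:R :> R by rewrite ltr0n fact_gt0.
split; first by apply: divr_ge0.
rewrite ler_pdivrMr // mul1r ler_nat /ell; exact: leq_div.
Qed.

Lemma s_bounds m : 0 <= s m <= 1.
Proof.
case: Hs => H0 HS.
suff: forall m j, (j <= m)%N -> 0 <= s j <= 1 by move/(_ m m (leqnn m)).
clear m.
elim=> [|m IH] j Hj; first by move: Hj; rewrite leqn0 => /eqP ->; rewrite H0 lexx ler01.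
move: Hj; rewrite leq_eqVlt => /orP [/eqP ->|Hj]; last by apply: IH.
have Hsq : 0 <= sq_coef s m <= (m.+1)%:R.
  have Ho : forall i, (i <= m)%N -> 0 <= onep s i <= 1.
    move=> i Hi; rewrite /onep; case: i Hi => [|i] Hi /=.
      by rewrite H0 addr0 ler01 lexx.
    by rewrite add0r; apply: IH.
  have -> : (m.+1)%:R = \sum_(i < m.+1) (1:R) by rewrite sumr_const card_ord.
  rewrite /sq_coef; apply/andP; split.
    apply: sumr_ge0 => i _.
    have /andP[? ?] := Ho i (ltnSE (ltn_ord i)).
    have /andP[? ?] := Ho (m - i)%N (leq_subr _ _).
    exact: mulr_ge0.
  apply: ler_sum => i _.
  have /andP[? ?] := Ho i (ltnSE (ltn_ord i)).
  have /andP[? ?] := Ho (m - i)%N (leq_subr _ _).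
  by rewrite -[1]mul1r; apply: ler_pM.
have HM : 0 < (m.+1)%:R :> R by rewrite ltr0n.
have := HS m.
case: eqP => Hmk; last first.
  rewrite subr0 => E; move/andP: Hsq => [Ha Hb]; rewrite -E in Ha Hb.
  apply/andP; split; nra.
case Ht: (Defs.tsize t) Hmk => [|k] Hmk.
  rewrite mulr0 subr0 => E; move/andP: Hsq => [Ha Hb]; rewrite -E in Ha Hb.
  apply/andP; split; nra.
rewrite /= in Hmk; subst k.
rewrite sq_T; last by move=> i Hi; apply: s_T; rewrite Ht ltnS.
have [W1 W2] := wt_bounds.
move=> E; apply/andP; split; nra.
Qed.
End SB.

Lemma crec_cnt k : ((k.+2) * cnt k.+1 = (4 * k + 2) * cnt k)%N.
Proof. exact: (@cat_rec cnt cnt0 cntS k). Qed.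

Theorem proposition3p7 (R : realType) (S : btree -> nat -> R)
  (HS : forall t : btree, is_St_coef t (S t)) :
  exists (C : R) (N : nat), forall n : nat, (N <= n)%N ->
    `| \sum_(1 <= k < n.+1 | (k%:R < log4 (n%:R : R)))
         \sum_(t <- trees_of_size k) (1 - S t n / Tcoef n) |
    <= C * (n%:R / (log4 (n%:R : R)) `^ (3%:R / 2%:R)).
Proof.
exists 4, 1%N => n Hn.
have Tn : Tcoef n = 1 :> R by rewrite /Tcoef; case: n Hn.
rewrite Tn.
set L := log4 (n%:R : R).
pose P : pred nat := fun k => (k%:R < L).
have Pdown : forall k, P k.+1 -> P k.
  by move=> k; rewrite /P; apply: le_lt_trans; rewrite ler_nat.
set G := \sum_(1 <= k < n.+1 | _) _.
have Hinner : forall k, 0 <= \sum_(t <- trees_of_size k) (1 - S t n / 1) <= (cnt k)%:R.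
  move=> k; rewrite /cnt -sum1_size natr_sum; apply/andP; split.
    by apply: sumr_ge0 => t _; have /andP[? ?] := @s_bounds _ _ _ (HS t) n; rewrite divr1 subr_ge0.
  by apply: ler_sum => t _; have /andP[? ?] := @s_bounds _ _ _ (HS t) n; rewrite divr1 lerBlDr lerDl.
have HG0 : 0 <= G.
  by apply: sumr_ge0 => k _; have /andP[] := Hinner k.
have HGF : G <= (F cnt P n.+1)%:R.
  rewrite /F natr_sum /G big_mkcond /=; apply: ler_sum => k _.
  rewrite /P; case: ifP => _; last by [].
  by have /andP[] := Hinner k.
rewrite ger0_norm //.
have Hn0 : 0 < n%:R :> R by rewrite ltr0n.
have HL0 : 0 <= L.
  by rewrite /L /log4; apply: divr_ge0; apply: ln_ge0; rewrite ?ler1n // ler1n.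
have RHS0 : 0 <= 4 * (n%:R / L `^ (3%:R / 2%:R)) :> R.
  by apply: mulr_ge0 => //; apply: divr_ge0; [apply: ltW | apply: powR_ge0].
case: (@F_bound cnt cnt0 crec_cnt P Pdown n.+1) => [HF|[j [Hj1 Hjn HPj HFj Hjj]]].
  by apply: le_trans HGF _; rewrite HF.
have ln4 : 0 < ln (4 : R) by apply: ln_gt0; rewrite (ltr1n R 4).
have H4j : (4 ^ j)%:R < n%:R :> R.
  have H1 : j%:R * ln 4 < ln (n%:R : R) by rewrite -ltr_pdivlMr.
  have Ha : (4 ^ j)%:R \in (@Num.pos R) by rewrite posrE ltr0n expn_gt0.
  have Hb : n%:R \in (@Num.pos R) by rewrite posrE.
  rewrite -(ltr_ln Ha Hb).
  rewrite natrX lnXn; last by rewrite ltr0n.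
  by rewrite -[_ *+ j]mulr_natl.
have Hjn' : j != n.
  apply/eqP => E; move: H4j; rewrite E ltr_nat => H.
  by have := ltn_expl n (isT : (1 < 4)%N); rewrite ltnNge (ltnW H).
have HLj : L <= (j.+1)%:R.
  case: Hjj => [[E]|]; first by rewrite E eqxx in Hjn'.
  by rewrite /P leNgt.
set J : R := j%:R.
set x : R := (cnt j)%:R.
have HJ1 : 1 <= J by rewrite /J ler1n.
have HcR : x^+2 * (J+1)^+2 * (3%:R*J+1) <= ((4^j)%:R)^+2 :> R.
  have E : ((4^j)^2 = 16^j)%N by rewrite -expnM mulnC expnM.
  rewrite -natrX E.
  rewrite (_ : x^+2 * _ * _ = (cnt j ^ 2 * j.+1 ^ 2 * (3 * j + 1))%N%:R).
    by rewrite ler_nat; exact: (@cat_bound cnt cnt0 crec_cnt j).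
  rewrite /x /J !natrM ?natrD ?natrM -?natr1; ring.
have HLJ : L <= J + 1 by rewrite /J natr1.
have HJL : J < L by exact: HPj.
have HL0' : 0 < L by lra.
set p := L `^ (3%:R / 2%:R).
have Hp0 : 0 < p by apply: powR_gt0.
have Hp2 : p ^+ 2 = L ^+ 3.
  rewrite -powR_mulrn; last exact: ltW.
  have E3 : 3%:R / 2%:R * 2%:R = 3%:R :> R by rewrite divfK // pnatr_eq0.
  rewrite -powRrM E3 powR_mulrn //; exact: ltW.
have Hx0 : 0 <= x by rewrite /x ler0n.
have Hxp : x * p <= n%:R.
  have : (x * p) ^+ 2 <= n%:R ^+ 2.
    rewrite exprMn Hp2.
    have HL3 : L ^+ 3 <= (J + 1) ^+ 2 * (3%:R * J + 1).
      apply: le_trans (_ : (J + 1) ^+ 3 <= _).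
        by apply: lerXn2r; rewrite ?nnegrE //; lra.
      rewrite exprSr; apply: ler_wpM2l; first by apply: exprn_ge0; lra.
      lra.
    apply: le_trans (_ : x ^+ 2 * ((J + 1) ^+ 2 * (3%:R * J + 1)) <= _).
      by apply: ler_wpM2l => //; apply: exprn_ge0.
    rewrite mulrA; apply: le_trans HcR _.
    by apply: lerXn2r; rewrite ?nnegrE ?ler0n //; apply: ltW.
  rewrite ler_pXn2r // nnegrE //; exact: mulr_ge0 (ltW Hp0).
apply: le_trans HGF _.
apply: le_trans (_ : (2 * cnt j)%:R <= _); first by rewrite ler_nat.
rewrite natrM -/x mulrA ler_pdivlMr //.
rewrite -mulrA; lra.
Qed.
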